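(* For every $N$, there exists a map $f:\mathcal D_N\to\{0,1\}$ that is the restriction to $\mathcal D_N$ of a linear function on $\mathbb R^N$, such that every function $\bar f:\{0,1\}^N\to\{0,1\}$ agreeing with $f$ on $\mathcal D_N$ has degree at least $\Omega(\log N)$.
   Context: $\mathcal D_N=\{e_1,\dots,e_N\}\subseteq\{0,1\}^N$ is the set of standard basis vectors. The degree of a Boolean function $\bar f:\{0,1\}^N\to\{0,1\}$ is the degree of its unique multilinear polynomial representation. *)

(* Defs.v *)
From HB Require Import structures.
From mathcomp Require Import all_boot all_order all_algebra.
From mathcomp Require Import Rstruct.
From Stdlib Require Reals.
Set Implicit Arguments. Unset Strict Implicit. Unset Printing Implicit Defensive.
Import Order.TTheory GRing.Theory Num.Theory.
Local Open Scope ring_scope.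

Definition cube (N : nat) := 'I_N -> bool.

Definition basis_vec (N : nat) (i : 'I_N) : cube N := fun j => j == i.

Definition ml_eval (N : nat) (c : {set 'I_N} -> Rdefinitions.R) (x : cube N) : Rdefinitions.R :=
  \sum_(S : {set 'I_N}) c S * \prod_(i in S) ((x i)%:R : Rdefinitions.R).

Definition ml_rep (N : nat) (g : cube N -> bool) (c : {set 'I_N} -> Rdefinitions.R) : Prop :=
  forall x : cube N, ((g x)%:R : Rdefinitions.R) = ml_eval c x.

(* Quantifying over all
   representations is equivalent by uniqueness of the representation. *)
Definition degree_ge (N : nat) (g : cube N -> bool) (D : Rdefinitions.R) : Prop :=
  forall c : {set 'I_N} -> Rdefinitions.R, ml_rep g c ->
    exists S : {set 'I_N}, c S <> 0 /\ D <= (#|S|%:R : Rdefinitions.R).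

(* f : D_N -> {0,1}, given by its values f i = f(e_i), is the restriction
   to D_N of a linear map x |-> sum_j a_j x_j on Rdefinitions.R^N. *)
Definition restr_linear (N : nat) (f : 'I_N -> bool) : Prop :=
  exists a : 'I_N -> Rdefinitions.R, forall i : 'I_N,
    ((f i)%:R : Rdefinitions.R) = \sum_(j < N) a j * ((basis_vec i j)%:R : Rdefinitions.R).

(* Main.v *)
Require Import Defs.
From HB Require Import structures.
From mathcomp Require Import all_boot all_order all_algebra.
From mathcomp Require Import Rstruct.
From Stdlib Require Reals.
From mathcomp Require Import ring zify.
From Stdlib Require Import FunctionalExtensionality.
From Stdlib Require Lra.
Set Implicit Arguments. Unset Strict Implicit. Unset Printing Implicit Defensive.
Import Order.TTheory GRing.Theory Num.Theory.
Local Open Scope ring_scope.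
Notation RR := Rdefinitions.R.

Section Core.
Variable n : nat.
Implicit Types (A B S T U V W Z : {set 'I_n}).

Definition flip (u : 'I_n) A := if u \in A then A :\ u else u |: A.

Lemma in_flip u A x : (x \in flip u A) = (x \in A) (+) (x == u).
Proof.
rewrite /flip; case: (boolP (u \in A)) => hu; rewrite !inE;
  case: (eqVneq x u) => [->|ne]; rewrite ?hu ?eqxx ?(negbTE ne) ?(negbTE hu) ?addbF //=.
Qed.

Lemma flipK u : involutive (flip u).
Proof. by move=> A; apply/setP => x; rewrite !in_flip -addbA addbb addbF. Qed.

Lemma card_sets : #|{set 'I_n}| = (2 ^ n)%N.
Proof. by rewrite -cardsT -powersetT card_powerset cardsT card_ord. Qed.

Definition chi S A : RR := (-1) ^+ #|S :&: A|.

Lemma setI_flip_out u S A : u \notin S -> S :&: flip u A = S :&: A.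
Proof.
move=> uS; apply/setP => x; rewrite !inE in_flip.
case: (eqVneq x u) => [->|ne]; rewrite ?(negbTE uS) ?(negbTE ne) ?addbF //.
Qed.

Lemma chi_flip u S A : chi S (flip u A) = if u \in S then - chi S A else chi S A.
Proof.
case: (boolP (u \in S)) => uS; last by rewrite /chi setI_flip_out.
rewrite /chi /flip; case: (boolP (u \in A)) => uA.
- rewrite setIDA (cardsD1 u (S :&: A)) inE uS uA /= add1n exprS mulN1r opprK.
  done.
- have uSA : u \notin S :&: A by rewrite inE (negbTE uA) andbF.
  rewrite setIUr (setIidPr _); last by rewrite sub1set.
  by rewrite cardsU1 uSA add1n exprS mulN1r.
Qed.

Lemma sum_flip_zero (h : {set 'I_n} -> RR) u :
  (forall A, h (flip u A) = - h A) -> \sum_A h A = 0.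
Proof.
move=> H.
have E : \sum_A h A = \sum_A h (flip u A) := reindex_inj (can_inj (flipK u)).
have : \sum_A h A = - \sum_A h A by rewrite {1}E -sumrN; apply: eq_bigr => A _; rewrite H.
move=> /eqP; rewrite -subr_eq0 opprK -mulr2n -mulr_natr mulf_eq0 /= => /orP[/eqP //|].
by rewrite pnatr_eq0.
Qed.

Lemma chi2 S A : chi S A * chi S A = 1.
Proof. by rewrite /chi -exprMn mulrNN mulr1 expr1n. Qed.

Lemma orth S T : \sum_A chi S A * chi T A = if S == T then (2 ^ n)%:R else 0.
Proof.
case: eqP => [<-|neq].
  by rewrite (eq_bigr (fun _ => 1)) ?sumr_const ?card_sets // => A _; rewrite chi2.
have [u hu] : exists u, (u \in S) != (u \in T).
  case: (boolP (S \subset T)) => hST.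
    case: (boolP (T \subset S)) => hTS; first by case: neq; apply/eqP; rewrite eqEsubset hST.
    by case/subsetPn: hTS => u uT uS; exists u; rewrite uT (negbTE uS).
  by case/subsetPn: hST => u uS uT; exists u; rewrite uS (negbTE uT).
apply: (sum_flip_zero (u := u)) => A; rewrite !chi_flip.
by move: hu; case: (u \in S); case: (u \in T) => //= _; rewrite ?mulNr ?mulrN.
Qed.


Lemma chiC S A : chi S A = chi A S.
Proof. by rewrite /chi setIC. Qed.

Definition fc (F : {set 'I_n} -> RR) S := ((2 ^ n)%:R)^-1 * \sum_A F A * chi S A.

Lemma pow2_neq0 : ((2 ^ n)%:R : RR) != 0.
Proof. by rewrite pnatr_eq0 expn_eq0. Qed.

Lemma inversion F A : F A = \sum_S fc F S * chi S A.
Proof.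
rewrite /fc.
under eq_bigr => S _ do rewrite -mulrA mulr_suml.
rewrite -mulr_sumr exchange_big /=.
under eq_bigr => B _ do (under eq_bigr => S _ do rewrite -mulrA (chiC S B) (chiC S A); rewrite -mulr_sumr orth).
rewrite (bigD1 A) //= eqxx big1 ?addr0; last by move=> B /negbTE ->; rewrite mulr0.
by rewrite mulrC -mulrA mulfV ?pow2_neq0 // mulr1.
Qed.

Lemma bilin (b1 b2 : {set 'I_n} -> RR) :
  \sum_A (\sum_S b1 S * chi S A) * (\sum_T b2 T * chi T A)
  = (2 ^ n)%:R * \sum_S b1 S * b2 S.
Proof.
under eq_bigr => A _ do rewrite mulr_suml.
under eq_bigr => A _ do under eq_bigr => S _ do rewrite mulr_sumr.
rewrite exchange_big /= mulr_sumr; apply: eq_bigr => S _.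
rewrite exchange_big /=.
under eq_bigr => T _ do (under eq_bigr => A _ do rewrite mulrACA; rewrite -mulr_sumr orth).
rewrite (bigD1 S) //= eqxx big1 ?addr0; last by move=> T hT; rewrite eq_sym (negbTE hT) mulr0.
by rewrite mulrC.
Qed.


Lemma subset_flip T u A : u \notin T -> (T \subset flip u A) = (T \subset A).
Proof.
move=> uT; apply/subsetP/subsetP => H x xT; move: (H x xT); rewrite in_flip;
  have -> : (x == u) = false by apply/negbTE; apply: contraNneq uT => <-.
all: by rewrite addbF.
Qed.

Lemma zero_sub S T u : u \in S -> u \notin T ->
  \sum_(A : {set 'I_n}) (T \subset A)%:R * chi S A = 0.
Proof.
move=> uS uT; apply: (sum_flip_zero (u := u)) => A.
by rewrite chi_flip uS subset_flip // mulrN.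
Qed.

Definition Fpm (g : {set 'I_n} -> bool) A : RR := 1 - 2 * (g A)%:R.

Lemma fc_deg (g : {set 'I_n} -> bool) (c : {set 'I_n} -> RR) d :
  (forall A, (g A)%:R = \sum_T c T * (T \subset A)%:R) ->
  (forall T, c T != 0 -> (#|T| <= d)%N) ->
  forall S, (d < #|S|)%N -> fc (Fpm g) S = 0.
Proof.
move=> rep deg S hS.
have [u uS] : exists u, u \in S.
  by apply/set0Pn; rewrite -card_gt0; apply: leq_ltn_trans hS.
rewrite /fc /Fpm.
under eq_bigr => A _ do rewrite rep mulrBl mul1r.
rewrite sumrB.
have -> : \sum_A chi S A = 0.
  rewrite -[RHS](@zero_sub S set0 u uS (negbT (in_set0 u))).
  by apply: eq_bigr => A _; rewrite sub0set mul1r.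
have -> : \sum_(A : {set 'I_n}) 2 * (\sum_T c T * (T \subset A)%:R) * chi S A = 0.
  under eq_bigr => A _ do rewrite -mulrA mulr_suml.
  rewrite -mulr_sumr exchange_big /= big1 ?mulr0 // => T _.
  case: (eqVneq (c T) 0) => [->|cT].
    by rewrite big1 // => A _; rewrite !mul0r.
  have : ~~ (S \subset T).
    apply: contraTN hS => sST; rewrite -leqNgt.
    exact: leq_trans (subset_leq_card sST) (deg _ cT).
  case/subsetPn => w wS wT.
  under eq_bigr => A _ do rewrite -mulrA.
  by rewrite -mulr_sumr (zero_sub wS wT) mulr0.
by rewrite subrr mulr0.
Qed.

Lemma card_sumR (P : pred {set 'I_n}) : (#|P|%:R : RR) = \sum_A (P A)%:R.
Proof.
rewrite -sum1_card natr_sum big_mkcond /=; apply: eq_bigr => A _.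
by rewrite [A \in P]unfold_in; case: (P A).
Qed.

Lemma card_ord_sumR (S : {set 'I_n}) : (#|S|%:R : RR) = \sum_(i < n) (i \in S)%:R.
Proof.
rewrite -sum1_card natr_sum big_mkcond /=; apply: eq_bigr => i _.
by case: (i \in S).
Qed.


Lemma influence_bound (g : {set 'I_n} -> bool) (c : {set 'I_n} -> RR) d :
  (forall A, (g A)%:R = \sum_T c T * (T \subset A)%:R) ->
  (forall T, c T != 0 -> (#|T| <= d)%N) ->
  \sum_(i < n) (#|[pred A | g A != g (flip i A)]|%:R : RR) <= (d * 2 ^ n)%:R.
Proof.
move=> rep deg.
set F := Fpm g; set b := fc F; set K : RR := (2 ^ n)%:R.
have bdeg := fc_deg rep deg.
have Finv A : F A = \sum_S b S * chi S A := inversion F A.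
have Fflip i A : F (flip i A) = \sum_S (b S * (1 - 2 * (i \in S)%:R)) * chi S A.
  rewrite Finv; apply: eq_bigr => S _; rewrite chi_flip.
  by case: (i \in S) => /=; rewrite ?mulr1n ?mulr0n; ring.
have pm A B : 2 * ((g A != g B)%:R : RR) = 1 - F A * F B.
  by rewrite /F /Fpm; case: (g A); case: (g B) => /=; rewrite ?mulr1n ?mulr0n; ring.
have FF A : F A * F A = 1.
  by rewrite /F /Fpm; case: (g A) => /=; rewrite ?mulr1n ?mulr0n; ring.
have sum1 : \sum_(A : {set 'I_n}) (1 : RR) = K by rewrite sumr_const card_sets.
have pars : \sum_S b S * b S = 1.
  have : \sum_A F A * F A = K by rewrite -sum1; apply: eq_bigr => A _; rewrite FF.
  rewrite (eq_bigr (fun A => (\sum_S b S * chi S A) * (\sum_S b S * chi S A)));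
    last by move=> A _; rewrite -Finv.
  rewrite bilin -[X in _ = X]mulr1 => /mulfI; apply.
  exact: pow2_neq0.
have cnt i : 2 * (#|[pred A | g A != g (flip i A)]|%:R : RR)
   = K - K * \sum_S b S * (b S * (1 - 2 * (i \in S)%:R)).
  rewrite card_sumR mulr_sumr.
  under eq_bigr => A _ do rewrite pm.
  rewrite sumrB sum1; congr (_ - _).
  rewrite -bilin; apply: eq_bigr => A _; by rewrite -Finv -Fflip.
set Q := \sum_S b S * b S * (#|S|%:R : RR).
have sumi : \sum_(i < n) \sum_S b S * (b S * (1 - 2 * (i \in S)%:R)) = n%:R - 2 * Q.
  rewrite exchange_big /=.
  under eq_bigr => S _ do rewrite -mulr_sumr.
  under eq_bigr => S _ do under eq_bigr => i _ do rewrite mulrBr mulr1.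
  have inner (x : RR) S : \sum_(i < n) (x - x * (2 * (i \in S)%:R)) = x * (n%:R - 2 * #|S|%:R).
    by rewrite sumrB -mulr_sumr -mulr_sumr -card_ord_sumR sumr_const card_ord mulrBr; congr (_ - _); rewrite mulr_natr.
  under eq_bigr => S _ do rewrite inner.
  rewrite (eq_bigr (fun S => n%:R * (b S * b S) - 2 * (b S * b S * #|S|%:R))); last by move=> S _; ring.
  by rewrite sumrB -!mulr_sumr pars mulr1.
have Qd : Q <= d%:R * \sum_S b S * b S.
  rewrite mulr_sumr /Q; apply: ler_sum => S _.
  case: (leqP #|S| d) => hS.
    rewrite mulrC; apply: ler_wpM2r; last by rewrite ler_nat.
    by rewrite -expr2 sqr_ge0.
  by rewrite /b /F bdeg // !mul0r mulr0.
rewrite pars mulr1 in Qd.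
have tot : 2 * \sum_(i < n) (#|[pred A | g A != g (flip i A)]|%:R : RR) = 2 * (K * Q).
  rewrite mulr_sumr; under eq_bigr => i _ do rewrite cnt.
  rewrite sumrB -mulr_sumr sumi sumr_const card_ord; ring.
have -> : \sum_(i < n) (#|[pred A | g A != g (flip i A)]|%:R : RR) = K * Q.
  by apply: (mulfI (x := 2)) => //; rewrite pnatr_eq0.
rewrite natrM [X in _ <= X]mulrC; apply: ler_wpM2l => //; exact: ler0n.
Qed.


Lemma subset_split T Z V S : Z :&: S = set0 -> V \subset S ->
  (T \subset Z :|: V) = (T :&: S \subset V) && (T :\: S \subset Z).
Proof.
move=> ZS VS; apply/idP/andP.
  move=> /subsetP H; split; apply/subsetP => x; rewrite !inE.
  - move=> /andP[xT xS]; move: (H x xT); rewrite !inE => /orP[xZ|//].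
    have : x \in Z :&: S by rewrite inE xZ xS.
    by rewrite ZS inE.
  - move=> /andP[xS xT]; move: (H x xT); rewrite !inE => /orP[//|xV].
    by move: xS; rewrite (subsetP VS x xV).
case=> /subsetP H1 /subsetP H2; apply/subsetP => x xT; rewrite inE.
case: (boolP (x \in S)) => xS.
  by rewrite H1 ?orbT // inE xT xS.
by rewrite H2 // inE xT xS.
Qed.

Section ClaimA.
Variable e : {set 'I_n} -> RR.
Variable S : {set 'I_n}.
Definition eZ Z V := \sum_T ((T :&: S == V) && (T :\: S \subset Z))%:R * e T.

Lemma eZ_sum Z V : Z :&: S = set0 -> V \subset S ->
  \sum_T e T * (T \subset Z :|: V)%:R = \sum_(W : {set 'I_n}) (W \subset V)%:R * eZ Z W.
Proof.
move=> ZS VS; rewrite /eZ.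
under [RHS]eq_bigr => W _ do rewrite mulr_sumr.
rewrite exchange_big /=; apply: eq_bigr => T _.
rewrite (bigD1 (T :&: S)) //= big1 ?addr0; last first.
  by move=> W /negbTE hW; rewrite eq_sym hW /= mul0r mulr0.
rewrite eqxx /= (subset_split _ ZS VS).
by case: (T :&: S \subset V); case: (T :\: S \subset Z); rewrite /= ?mulr1n ?mulr0n ?mul1r ?mul0r ?mulr0 ?mulr1.
Qed.

Lemma eZ_out Z V : ~~ (V \subset S) -> eZ Z V = 0.
Proof.
move=> VS; rewrite /eZ big1 // => T _.
case: eqP => [hT|]; last by rewrite mul0r.
by case/negP: VS; rewrite -hT subsetIr.
Qed.

End ClaimA.


Lemma claimA (e : {set 'I_n} -> RR) k (q : {set 'I_n} -> RR) :
  (forall A, q A = \sum_T e T * (T \subset A)%:R) ->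
  (forall T, e T != 0 -> (#|T| <= k)%N) ->
  (exists A0, q A0 != 0) ->
  (2 ^ (n - k) <= #|[set A | q A != 0%R]|)%N.
Proof.
move=> rep deg [A0 hA0].
have [S0 hS0] : exists S0, e S0 != 0.
  case: (pickP (fun S => e S != 0)) => [S0 h|none]; first by exists S0.
  move: hA0; rewrite rep big1 ?eqxx // => T _.
  by have := none T; rewrite /= => /negbFE/eqP ->; rewrite mul0r.
case: (@arg_maxnP _ S0 (fun S => e S != 0) (fun S => #|S|) hS0) => S eS Smax.
have eZS Z : Z :&: S = set0 -> eZ e S Z S = e S.
  move=> ZS; rewrite /eZ (bigD1 S) //= setIid eqxx setDv sub0set /= mul1r big1 ?addr0 // => T hT.
  case: (boolP (T :&: S == S)) => [/eqP hTS|]; last by rewrite mul0r.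
  have sST : S \proper T by rewrite properEneq eq_sym hT /= -hTS subsetIl.
  case: (eqVneq (e T) 0) => [->|eT]; first by rewrite mulr0.
  by have := Smax T eT; rewrite /= leqNgt (proper_card sST).
pose VZ Z := [arg min_(V < S | eZ e S Z V != 0) #|V|].
have VZ_prop Z : Z :&: S = set0 -> VZ Z \subset S /\ q (Z :|: VZ Z) != 0.
  move=> ZS; have h0 : eZ e S Z S != 0 by rewrite eZS.
  rewrite /VZ; case: (@arg_minnP _ S (fun V => eZ e S Z V != 0) (fun V => #|V|) h0) => V eV Vmin.
  case: (boolP (V \subset S)) => VS; last by move: eV; rewrite eZ_out ?eqxx.
  split=> //; rewrite rep (eZ_sum e ZS VS) (bigD1 V) //= subxx mul1r big1 ?addr0 // => W hW.
  case: (boolP (W \subset V)) => WV; last by rewrite mul0r.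
  have /proper_card ltWV : W \proper V by rewrite properEneq hW WV.
  case: (eqVneq (eZ e S Z W) 0) => [->|nz]; first by rewrite mulr0.
  by have := Vmin W nz; rewrite leqNgt ltWV.
set D := powerset (~: S).
have ZS Z : Z \in D -> Z :&: S = set0.
  by rewrite inE => h; apply/eqP; rewrite setI_eq0 disjoints_subset.
have key Z : Z \in D -> (Z :|: VZ Z) :\: S = Z.
  move=> hZ; rewrite setDUl; have [VS _] := VZ_prop Z (ZS Z hZ).
  have -> : VZ Z :\: S = set0 by apply/eqP; rewrite setD_eq0.
  rewrite setU0; apply/setDidPl; rewrite -setI_eq0; exact/eqP/ZS.
have inj : {in D &, injective (fun Z => Z :|: VZ Z)}.
  by move=> Z1 Z2 h1 h2 E; rewrite -(key Z1 h1) E key.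
have cD : #|D| = (2 ^ (n - #|S|))%N.
  have h := cardsC S; rewrite card_ord in h.
  by rewrite card_powerset; congr (expn 2 _); rewrite -[X in _ = (X - _)%N]h addKn.
apply: (leq_trans (leq_pexp2l _ (leq_sub2l n (deg S eS)))) => //.
rewrite -cD -(card_in_imset inj); apply: subset_leq_card.
apply/subsetP => A /imsetP [Z hZ ->]; rewrite inE.
exact: (VZ_prop Z (ZS Z hZ)).2.
Qed.


Lemma setU1_in i A : i \in A -> i |: A = A.
Proof. by move=> iA; apply/setP => x; rewrite !inE; case: eqP => // ->. Qed.

Lemma setD1_out i A : i \notin A -> A :\ i = A.
Proof.
move=> iA; apply/setP => x; rewrite !inE; case: eqP => // -> /=.
by rewrite (negbTE iA).
Qed.

Lemma ns (g : {set 'I_n} -> bool) (c : {set 'I_n} -> RR) d :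
  (forall A, (g A)%:R = \sum_T c T * (T \subset A)%:R) ->
  (forall T, c T != 0 -> (#|T| <= d)%N) ->
  (#|[set i : 'I_n | g [set i] != g set0]| * 2 ^ (n - d.-1) <= d * 2 ^ n)%N.
Proof.
move=> rep deg.
pose cnt (i : 'I_n) := #|[pred A | g A != g (flip i A)]|.
have IB := influence_bound rep deg.
have low i : g [set i] != g set0 -> (2 ^ (n - d.-1) <= cnt i)%N.
  move=> rel.
  pose q A : RR := (g (i |: A))%:R - (g (A :\ i))%:R.
  pose e T : RR := if i \in T then 0 else c (i |: T).
  have qrep A : q A = \sum_T e T * (T \subset A)%:R.
    rewrite /q !rep -sumrB (bigID (fun S => i \in S)) /=.
    rewrite [X in _ + X]big1 ?addr0; last first.
      move=> S iS; rewrite -mulrBr.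
      have -> : (S \subset i |: A) = (S \subset A :\ i); last by rewrite subrr mulr0.
      apply/subsetP/subsetP => H x xS; have xi : x != i by apply: contraNneq iS => <-.
        by move: (H x xS); rewrite !inE xi (negbTE xi).
      by move: (H x xS); rewrite !inE => /andP[_ ->]; rewrite orbT.
    rewrite [RHS](bigID (fun T => i \in T)) /= [X in _ = X + _]big1 ?add0r; last first.
      by move=> T iT; rewrite /e iT mul0r.
    rewrite (reindex_onto (fun T => i |: T) (fun S => S :\ i)) /=; last first.
      by move=> S iS; rewrite setD1K.
    apply: eq_big => T.
      rewrite setU11 /=; apply/eqP/idP => [<-|iT]; first by rewrite !inE eqxx.
      by rewrite setU1K.
    move=> /andP[_ /eqP hT].
    have iT : i \notin T by rewrite -hT !inE eqxx.
    rewrite /e (negbTE iT).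
    have -> : (i |: T \subset A :\ i) = false.
      by apply/negbTE/negP => /subsetP /(_ i); rewrite !inE eqxx /= => /(_ isT).
    rewrite /= mulr0n mulr0 subr0; congr (_ * _%:R); congr (nat_of_bool _).
    apply/idP/idP => H; apply/subsetP => x.
      move=> xT; have xi : x != i by apply: contraNneq iT => <-.
      by move: (subsetP H x); rewrite !inE xT orbT (negbTE xi) /= => /(_ isT).
    by rewrite !inE => /orP[->//|xT]; rewrite (subsetP H x xT) orbT.
  have edeg T : e T != 0 -> (#|T| <= d.-1)%N.
    rewrite /e; case: ifP => iT; first by rewrite eqxx.
    move=> /deg; rewrite cardsU1 iT /=; case: d {deg IB} => //.
  have q0 : q set0 != 0.
    rewrite /q setU0 set0D; move: rel.
    by case: (g [set i]); case: (g set0); rewrite //= ?mulr1n ?mulr0n ?subr0 ?sub0r ?oppr_eq0 ?oner_eq0.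
  have := claimA qrep edeg (ex_intro _ set0 q0).
  suff -> : #|[set A | q A != 0%R]| = cnt i by [].
  apply: eq_card => A; rewrite !inE /flip /q.
  case: (boolP (i \in A)) => iA.
    rewrite (setU1_in iA); by case: (g A); case: (g (A :\ i)); rewrite /= ?mulr1n ?mulr0n ?subrr ?subr0 ?sub0r ?oppr_eq0 ?oner_eq0 ?eqxx.
  rewrite (setD1_out iA); by case: (g A); case: (g (i |: A)); rewrite /= ?mulr1n ?mulr0n ?subrr ?subr0 ?sub0r ?oppr_eq0 ?oner_eq0 ?eqxx.
have IBn : (\sum_(i < n) cnt i <= d * 2 ^ n)%N.
  by rewrite -(ler_nat RR) natr_sum.
apply: leq_trans IBn.
rewrite -sum1_card big_distrl /= mul1n.
set Rl := [set i : 'I_n | g [set i] != g set0].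
apply: (@leq_trans (\sum_(i in Rl) cnt i)).
  by apply: leq_sum => i; rewrite inE => /low.
by rewrite [X in (_ <= X)%N](bigID (fun i => i \in Rl)) /= leq_addr.
Qed.

End Core.

Lemma sum_odd N : \sum_(i < N) (odd i : nat) = N./2.
Proof.
elim: N => [|N IH]; first by rewrite big_ord0.
by rewrite big_ord_recr /= IH uphalf_half addnC.
Qed.

Lemma card_odd N : #|[set i : 'I_N | odd i]| = N./2.
Proof.
rewrite -sum1_card big_mkcond /= -sum_odd; apply: eq_bigr => i _.
by rewrite inE; case: (odd i).
Qed.

Lemma arith_final M N k : (1 <= M)%N -> (N <= M.*2.+1)%N -> (k <= N)%N ->
  (M * 2 ^ (N - k) <= k.+1 * 2 ^ N)%N -> (N <= 4 ^ k.+1)%N.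
Proof.
move=> hM hN hk H.
have e : (2 ^ N = 2 ^ (N - k) * 2 ^ k)%N by rewrite -expnD subnK.
rewrite e mulnCA mulnC leq_pmul2l ?expn_gt0 // in H.
have key : (k.+1 * 2 ^ k.+1 + 1 <= 4 ^ k.+1)%N.
  elim: k {hk H e} => [|k IH]; first by [].
  rewrite expnS [(4 ^ _)%N]expnS.
  move: IH; set x := (2 ^ k.+1)%N; set y := (4 ^ k.+1)%N => IH.
  nia.
move: key; rewrite expnS; set x := (2 ^ k)%N => key.
have : (N <= k.+1 * (2 * x) + 1)%N.
  apply: (leq_trans hN); rewrite -muln2; nia.
move=> h; exact: leq_trans h key.
Qed.

Module RealPart.
Import Stdlib.Reals.Reals Stdlib.micromega.Lra.
Local Close Scope ring_scope.
Local Open Scope R_scope.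

Lemma ln2_lt1 : (ln 2 < 1).
Proof.
have h := exp_ineq1 1 ltac:(lra).
rewrite -(ln_exp 1). apply: ln_increasing; lra.
Qed.

Lemma lnN_le (N d : nat) : leq 1 N -> leq N (expn 4 d) -> (ln (INR N) <= 2 * INR d).
Proof.
move=> h1 h2.
have HN : (1 <= INR N) by apply: (le_INR 1); apply/ssrnat.leP.
have H4 : (INR N <= pow 4 d).
  have := le_INR _ _ (elimT ssrnat.leP h2).
  have -> : INR (expn 4 d) = pow 4 d; last done.
  elim: d {h2} => [|k IH]; first by rewrite expn0.
  rewrite expnS mult_INR IH /=. simpl INR. lra.
have : (ln (INR N) <= ln (pow 4 d)).
  case: (Rle_lt_or_eq_dec _ _ H4) => h.
  - left; apply: ln_increasing => //; lra.
  - by rewrite h; right.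
rewrite ln_pow; last lra.
have -> : (4 = 2 * 2) by lra.
rewrite ln_mult; try lra.
have := ln2_lt1. have := pos_INR d. nra.
Qed.

Lemma final_real0 (N d : nat) : leq 1 N -> leq N (expn 4 d) ->
  (/ INR 2 * ln (INR N) <= INR d).
Proof. move=> h1 h2; have := lnN_le h1 h2; simpl INR; lra. Qed.
End RealPart.

Lemma final_real (N d : nat) : (1 <= N)%N -> (N <= 4 ^ d)%N ->
  (2 : RR)^-1 * Rpower.ln (N%:R) <= d%:R.
Proof.
move=> h1 h2; have := RealPart.final_real0 h1 h2.
rewrite -!INRE => h; apply/RleP.
by rewrite -RinvE.
Qed.

Lemma prod_ind N (S A : {set 'I_N}) :
  \prod_(i in S) (((i \in A) : nat)%:R : RR) = ((S \subset A) : nat)%:R.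
Proof.
case: (boolP (S \subset A)) => h.
  by rewrite big1 // => i iS; rewrite (subsetP h i iS).
case/subsetPn: h => w wS wA.
by rewrite (bigD1 w) //= (negbTE wA) mul0r.
Qed.

Theorem mainTheorem10 :
  exists C : Rdefinitions.R, 0 < C /\ exists N0 : nat, forall N : nat, (N0 <= N)%N ->
    exists f : 'I_N -> bool, restr_linear f /\
      forall fbar : cube N -> bool,
        (forall i : 'I_N, fbar (basis_vec i) = f i) ->
        degree_ge fbar (C * Rpower.ln (N%:R)).
Proof.
exists (2^-1); split; first by rewrite invr_gt0 ltr0n.
exists 2%N => N hN.
exists (fun i : 'I_N => odd i); split.
  exists (fun j : 'I_N => ((odd j : nat)%:R : RR)) => i.
  rewrite (bigD1 i) //= /basis_vec eqxx mulr1 big1 ?addr0 // => j hj.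
  by rewrite (negbTE hj) mulr0.
move=> fbar hext c hrep.
pose g (A : {set 'I_N}) := fbar (fun j => j \in A).
have rep A : ((g A : nat)%:R : RR) = \sum_T c T * ((T \subset A) : nat)%:R.
  rewrite /g hrep /ml_eval; apply: eq_bigr => S _; by rewrite prod_ind.
have gi i : g [set i] = odd i.
  rewrite /g -hext; congr fbar; apply: functional_extensionality => j; by rewrite in_set1.
set M := #|[set i : 'I_N | g [set i] != g set0]|.
have hM : (1 <= M)%N /\ (N <= M.*2.+1)%N.
  have hc := cardsC [set i : 'I_N | odd i].
  rewrite card_ord card_odd in hc.
  have ho := odd_double_half N.
  have hb : (odd N <= 1)%N by case: (odd N).
  case hb0: (g set0).
    have -> : M = #|~: [set i : 'I_N | odd i]|.
      by apply: eq_card => i; rewrite !inE gi hb0; case: (odd i).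
    rewrite -muln2 in ho *; lia.
  have -> : M = N./2.
    rewrite -card_odd; apply: eq_card => i; rewrite !inE gi hb0; by case: (odd i).
  rewrite -muln2 in ho *; lia.
have [S0 hS0] : exists S0, c S0 != 0.
  case: (pickP (fun S => c S != 0)) => [S0 h|none]; first by exists S0.
  have g0 A : g A = false.
    have := rep A; rewrite big1 => [|T _]; last first.
      by have := none T; rewrite /= => /negbFE/eqP ->; rewrite mul0r.
    by case: (g A) => //= /eqP; rewrite oner_eq0.
  have : M = 0%N by apply: eq_card0 => i; rewrite !inE !g0.
  by move: hM => [+ _] => /[swap] ->.
case: (@arg_maxnP _ S0 (fun S => c S != 0) (fun S => #|S|) hS0) => S eS Smax.
have deg T : c T != 0 -> (#|T| <= #|S|)%N := Smax T.
have H := ns rep deg.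
exists S; split; first exact/eqP.
have hSN : (#|S| <= N)%N by have := max_card S; rewrite card_ord.
case: hM => hM1 hM2.
move: H hSN; case: #|S| => [|k] H hSN.
  move: H; rewrite /= subn0 mul0n leqn0 muln_eq0 expn_eq0 /= orbF => /eqP hM0.
  by move: hM1; rewrite /M hM0.
apply: final_real; first exact: leq_trans hN.
apply: (arith_final hM1 hM2 (ltnW hSN)).
exact: H.
Qed.
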